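(* Let $(p_D)_{D\in\mathcal{I}}$ be a probability distribution on $\mathcal{I}$ and for $\mathbf{Q}\in B(\mathcal{L})$ define $$p^M(\mathbf{Q})=-\log\left(\max_{D\in\mathcal{I}}p_D\right)+\log\left(\sum_{E}\max_{D:\mathbf{Q}(D)=E}p_D\right),$$ where $E$ ranges over $\{\mathbf{Q}(D):D\in\mathcal{I}\}$. Then $p^M$ has no information arbitrage: whenever $\mathbf{Q}_2\twoheadrightarrow\mathbf{Q}_1$, we have $p^M(\mathbf{Q}_2)\ge p^M(\mathbf{Q}_1)$.
   Context: $\mathcal{I}$ is a countable nonempty set of database instances; queries are deterministic functions on $\mathcal{I}$; a query bundle is a finite tuple of queries from a language $\mathcal{L}$, evaluated componentwise; $B(\mathcal{L})$ is the set of bundles. $\mathbf{Q}_2\twoheadrightarrow\mathbf{Q}_1$ means: for all $D',D''\in\mathcal{I}$, $\mathbf{Q}_2(D')=\mathbf{Q}_2(D'')$ implies $\mathbf{Q}_1(D')=\mathbf{Q}_1(D'')$. ($p^M$ equals $H_\infty(X)-H_\infty(X\mid\mathbf{Q}(X))$ for min-entropy $H_\infty$ and $X$ distributed according to $p_D$.) *)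

(* Defs.v *)
From HB Require Import structures.
From mathcomp Require Import all_boot all_order all_algebra.
From mathcomp Require Import all_classical all_reals all_analysis.
Set Implicit Arguments. Unset Strict Implicit. Unset Printing Implicit Defensive.
Import Order.TTheory GRing.Theory Num.Theory.
Local Open Scope classical_set_scope.
Local Open Scope ring_scope.

(* Database instances: a countable nonempty type I (countType). *)
Definition query (I : Type) (Out : Type) := I -> Out.

Definition bundle_in (I Out : Type) (L : set (I -> Out)) (Q : seq (I -> Out)) : Prop :=
  foldr (fun q P => L q /\ P) True Q.

Definition evalB (I Out : Type) (Q : seq (I -> Out)) (D : I) : seq Out :=
  map (fun q => q D) Q.

Definition determines (I Out : Type) (Q2 Q1 : seq (I -> Out)) : Prop :=
  forall D' D'' : I, evalB Q2 D' = evalB Q2 D'' -> evalB Q1 D' = evalB Q1 D''.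

Definition is_distribution (R : realType) (I : countType) (p : I -> R) : Prop :=
  (forall D, 0 <= p D) /\ (\esum_(D in [set: I]) (p D)%:E = 1)%E.

(* max_D p_D (the supremum, which is attained for a distribution) *)
Definition pmax (R : realType) (I : countType) (p : I -> R) : \bar R :=
  ereal_sup (range (fun D => (p D)%:E)).

Definition fibermax (R : realType) (I : countType) (Out : choiceType)
  (p : I -> R) (Q : seq (I -> Out)) (E : seq Out) : \bar R :=
  ereal_sup [set (p D)%:E | D in [set D | evalB Q D = E]].

Definition pM (R : realType) (I : countType) (Out : choiceType)
  (p : I -> R) (Q : seq (I -> Out)) : R :=
  - ln (fine (pmax p)) +
    ln (fine (\esum_(E in range (evalB Q)) fibermax p Q E)).

(* Main.v *)
Require Import Defs.
From HB Require Import structures.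
From mathcomp Require Import all_boot all_order all_algebra.
From mathcomp Require Import all_classical all_reals all_analysis.
Import Order.TTheory GRing.Theory Num.Theory.
Local Open Scope classical_set_scope.
Local Open Scope ring_scope.

Lemma esum_part (R : realType) (T B : choiceType) (S : set T) (h : T -> B)
  (f : T -> \bar R) : (forall x, S x -> (0 <= f x)%E) ->
  \esum_(x in S) f x =
  \esum_(b in h @` S) \esum_(x in [set x | S x /\ h x = b]) f x.
Proof.
move=> f0.
rewrite (esum_esum (a := fun _ x => f x)); last by move=> i j _ [/f0].
rewrite (@reindex_esum R T (B * T)%type S _ (fun x => (h x, x)) (fun k => f k.2)) //.
split.
- by move=> x Sx; split => //=; exists x.
- by move=> x y _ _ [].
- move=> [b x] /= [_ [Sx <-]]; by exists x.
Qed.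

Lemma singleton_le (R : realType) (T : choiceType) (S : set T) (f : T -> \bar R) x :
  S x -> (f x <= \esum_(y in S) f y)%E.
Proof.
move=> Sx; apply: esum_ge; exists [set x].
  by split; [exact: finite_set1 | move=> y ->].
by rewrite fsbig_set1.
Qed.

Theorem lemma20 (R : realType) (I : countType) (Out : choiceType)
  (L : set (I -> Out)) (p : I -> R) (D0 : I) :
  is_distribution p ->
  forall Q1 Q2 : seq (I -> Out),
    bundle_in L Q1 -> bundle_in L Q2 ->
    determines Q2 Q1 ->
    pM p Q1 <= pM p Q2.
Proof.
move=> [p0 Hsum] Q1 Q2 _ _ Hdet.
have fm_ge (Q : seq (I -> Out)) D : ((p D)%:E <= fibermax p Q (evalB Q D))%E.
  by apply: ereal_sup_ubound; exists D.
have fm_ge0 (Q : seq (I -> Out)) E : range (evalB Q) E -> (0 <= fibermax p Q E)%E.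
  by move=> [D _ <-]; rewrite (le_trans _ (fm_ge Q D)) // lee_fin.
set S := fun Q : seq (I -> Out) => (\esum_(E in range (evalB Q)) fibermax p Q E)%E.
have S_le1 (Q : seq (I -> Out)) : (S Q <= 1)%E.
  rewrite /S -Hsum (@esum_part _ _ _ setT (evalB Q)); last by move=> x _; rewrite lee_fin.
  apply: le_esum => E _; apply: ge_ereal_sup => _ [D HD <-].
  exact: singleton_le.
have S_ge0 (Q : seq (I -> Out)) : (0 <= S Q)%E by apply: esum_ge0 => E; apply: fm_ge0.
have S_pos : (0 < S Q1)%E.
  have [D pD] : exists D, 0 < p D.
    apply/not_existsP => H.
    have H0 D : [set: I] D -> (p D)%:E = 0%E.
      move=> _; congr (_%:E); apply/eqP; rewrite eq_le p0 andbT leNgt.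
      by apply/negP; exact: H.
    by move: Hsum; rewrite esum1 // => /esym/eqP; rewrite onee_eq0.
  apply: (@lt_le_trans _ _ (p D)%:E); first by rewrite lte_fin.
  apply: le_trans (fm_ge Q1 D) _.
  by apply: (@singleton_le _ _ (range (evalB Q1)) (fibermax p Q1)); exists D.
have S_mono : (S Q1 <= S Q2)%E.
  pose g E := evalB Q1 (xget D0 [set D | evalB Q2 D = E]).
  have gE D : g (evalB Q2 D) = evalB Q1 D.
    apply: Hdet; apply: (@xgetPex _ D0 [set D' | evalB Q2 D' = evalB Q2 D]).
    by exists D.
  rewrite /S (@esum_part _ _ _ (range (evalB Q2)) g); last by move=> x; apply: fm_ge0.
  have -> : g @` range (evalB Q2) = range (evalB Q1).
    apply/seteqP; split => x.
      by move=> [_ [D _ <-] <-]; exists D => //; rewrite gE.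
    by move=> [D _ <-]; exists (evalB Q2 D); [exists D|rewrite gE].
  apply: le_esum => E _; apply: ge_ereal_sup => _ [D HD <-].
  apply: le_trans (fm_ge Q2 D) _.
  apply: singleton_le; split; first by exists D.
  by rewrite gE.
rewrite /pM lerD2l.
have fin (Q : seq (I -> Out)) : (S Q \is a fin_num)%E.
  by rewrite ge0_fin_numE // (le_lt_trans (S_le1 Q)) // ltry.
rewrite ler_ln ?posrE; last 2 first.
- by apply: fine_gt0; rewrite S_pos (le_lt_trans (S_le1 Q1)) // ltry.
- apply: fine_gt0; rewrite (lt_le_trans S_pos S_mono) (le_lt_trans (S_le1 Q2)) //.
  exact: ltry.
exact: (fine_le (fin Q1) (fin Q2) S_mono).
Qed.
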